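(* Let $P\subset\mathbb{R}^d$ be a full-dimensional lattice polytope with codegree $a$. Then $P$ is nearly Gorenstein if and only if \[(C_P\cap\mathbb{Z}^{d+1})\setminus\{0\} \subseteq \big(\mathrm{int}(C_P)\cap\mathbb{Z}^{d+1}\big) + \big(\mathrm{ant}(C_P)\cap \mathbb{Z}^{d+1}\big).\] In particular, if $P$ is nearly Gorenstein, then \[P\cap\mathbb{Z}^d = \big(\mathrm{int}(C_P)_a\cap\mathbb{Z}^d\big) + \big(\mathrm{ant}(C_P)_{1-a}\cap\mathbb{Z}^d\big).\] The converse of the last statement also holds if $P$ has the integer decomposition property.
   Context: $\mathbf{k}$ is an infinite field. A lattice polytope $P\subset\mathbb{R}^d$ (vertices in $\mathbb{Z}^d$, full-dimensional) has facet presentation $P=\{x\in\mathbb{R}^d : n_F(x)\ge -h_F \text{ for all facets } F\}$, where each $n_F\in(\mathbb{Z}^d)^*$ is the primitive inner normal vector and $h_F\in\mathbb{Z}$. Define $C_P=\{(x,k)\in\mathbb{R}^{d+1}: n_F(x)\ge -kh_F \ \forall F\}$, $\mathrm{int}(C_P)=\{(x,k): n_F(x)> -kh_F\ \forall F\}$, and $\mathrm{ant}(C_P)=\{(x,k): n_F(x)\ge -kh_F-1\ \forall F\}$. For $X\subseteq\mathbb{R}^{d+1}$ and $k\in\mathbb{Z}$, $X_k=\{x\in\mathbb{R}^d: (x,k)\in X\}$. The Ehrhart ring is $A(P)=\mathbf{k}[\mathbf{t}^x s^k : k\in\mathbb{N},\ x\in kP\cap\mathbb{Z}^d]$, graded by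 $\deg(\mathbf{t}^xs^k)=k$, with graded maximal ideal $\mathbf{m}$ and canonical module $\omega$. The trace of $\omega$ is $\mathrm{tr}(\omega)=\sum_{\phi\in\mathrm{Hom}(\omega,A(P))}\phi(\omega)$; $P$ is nearly Gorenstein if $\mathbf{m}\subseteq \mathrm{tr}(\omega)$. The codegree of $P$ is $a=\min\{k\in\mathbb{Z}_{\ge1}: \mathrm{int}(kP)\cap\mathbb{Z}^d\neq\varnothing\}$. $P$ has the integer decomposition property (IDP) if for every positive integer $k$ every $x\in kP\cap\mathbb{Z}^d$ is a sum of $k$ lattice points of $P$. *)

(* Defs.v *)
From HB Require Import structures.
From mathcomp Require Import all_boot all_order all_algebra.
From mathcomp Require Import reals.
From mathcomp.multinomials Require Import monalg.

Set Implicit Arguments.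
Unset Strict Implicit.
Unset Printing Implicit Defensive.

Import Order.TTheory GRing.Theory Num.Theory.
Local Open Scope ring_scope.

(* A facet presentation of P is given by m primitive inner
   normals N i and integers h i:  P = {x : <N i, x> >= - h i}.          *)

Definition ipair (d : nat) (n x : 'rV[int]_d) : int := \sum_j n ord0 j * x ord0 j.

Definition rpair (R : numDomainType) (d : nat) (n : 'rV[int]_d) (x : 'rV[R]_d) : R :=
  \sum_j (n ord0 j)%:~R * x ord0 j.

Definition primitive (d : nat) (n : 'rV[int]_d) : Prop :=
  forall c : int, (forall j, (c %| n ord0 j)%Z) -> `|c| = 1.

Definition inP (R : numDomainType) (d m : nat) (N : 'I_m -> 'rV[int]_d)
  (h : 'I_m -> int) (x : 'rV[R]_d) : Prop :=
  forall i, - (h i)%:~R <= rpair (N i) x.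

Definition inConv (R : numDomainType) (d : nat) (V : seq 'rV[int]_d) (x : 'rV[R]_d) : Prop :=
  exists lam : 'I_(size V) -> R,
    [/\ forall i, 0 <= lam i, \sum_i lam i = 1 &
        x = \sum_i lam i *: map_mx (fun z : int => z%:~R) V`_i].

Definition lattice_polytope (R : numDomainType) (d m : nat) (N : 'I_m -> 'rV[int]_d)
  (h : 'I_m -> int) : Prop :=
  exists V : seq 'rV[int]_d, forall x : 'rV[R]_d, inP N h x <-> inConv V x.

Definition full_dim (R : numDomainType) (d m : nat) (N : 'I_m -> 'rV[int]_d)
  (h : 'I_m -> int) : Prop :=
  exists x : 'rV[R]_d, forall i, - (h i)%:~R < rpair (N i) x.

(* The presentation is irredundant: every inequality is needed, so that
   (P being full-dimensional) the inequalities are exactly the facets of P. *)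
Definition irredundant (R : numDomainType) (d m : nat) (N : 'I_m -> 'rV[int]_d)
  (h : 'I_m -> int) : Prop :=
  forall i, exists x : 'rV[R]_d,
    (forall j, j != i -> - (h j)%:~R <= rpair (N j) x) /\ rpair (N i) x < - (h i)%:~R.

(* Points of Z^{d+1} are pairs (x, k) with x in Z^d and k in Z.          *)

Definition inC (d m : nat) (N : 'I_m -> 'rV[int]_d) (h : 'I_m -> int)
  (p : 'rV[int]_d * int) : Prop :=
  forall i, - (p.2 * h i) <= ipair (N i) p.1.

Definition inInt (d m : nat) (N : 'I_m -> 'rV[int]_d) (h : 'I_m -> int)
  (p : 'rV[int]_d * int) : Prop :=
  forall i, - (p.2 * h i) < ipair (N i) p.1.

Definition inAnt (d m : nat) (N : 'I_m -> 'rV[int]_d) (h : 'I_m -> int)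
  (p : 'rV[int]_d * int) : Prop :=
  forall i, - (p.2 * h i) - 1 <= ipair (N i) p.1.

Definition is_codegree (d m : nat) (N : 'I_m -> 'rV[int]_d) (h : 'I_m -> int)
  (a : nat) : Prop :=
  [/\ (1 <= a)%N, exists x, inInt N h (x, a%:Z) &
      forall k : nat, (1 <= k)%N -> (k < a)%N -> forall x, ~ inInt N h (x, k%:Z)].

(* IDP: every lattice point of kP (k >= 1) is a sum of k lattice points of P.
   (kP cap Z^d = {x : n_F(x) >= -k h_F}.) *)
Definition IDP (d m : nat) (N : 'I_m -> 'rV[int]_d) (h : 'I_m -> int) : Prop :=
  forall k : nat, (0 < k)%N -> forall x : 'rV[int]_d, inC N h (x, k%:Z) ->
    exists v : 'I_k -> 'rV[int]_d, (forall i, inC N h (v i, 1)) /\ x = \sum_i v i.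

(* The monoid M0 d = {(x,k) in Z^d x N : k > 0 or x = 0}; its monoid algebra
   k[M0 d] contains the Ehrhart ring A(P) of every lattice polytope P in R^d
   (as 0P cap Z^d = {0}); the monomial t^x s^k is the basis element (x,k). *)

Definition m0_pred (d : nat) (p : 'rV[int]_d * nat) : bool := (p.2 == 0%N) ==> (p.1 == 0).

Record M0 (d : nat) := MkM0 { m0val : 'rV[int]_d * nat; m0P : m0_pred m0val }.

HB.instance Definition _ (d : nat) := [isSub for @m0val d].
HB.instance Definition _ (d : nat) := [Choice of M0 d by <:].

Section M0Monoid.
Variable d : nat.

Fact m0_one_proof : m0_pred ((0 : 'rV[int]_d), 0%N).
Proof. by rewrite /m0_pred /= eqxx. Qed.

Definition m0_one : M0 d := MkM0 m0_one_proof.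

Fact m0_mul_proof (p q : M0 d) :
  m0_pred ((m0val p).1 + (m0val q).1, ((m0val p).2 + (m0val q).2)%N).
Proof.
case: p q => [[x k] /= Hp] [[y l] /= Hq]; rewrite /m0_pred /= addn_eq0.
apply/implyP => /andP [/eqP k0 /eqP l0].
move: Hp Hq; rewrite /m0_pred /= k0 l0 /= => /eqP -> /eqP ->.
by rewrite addr0.
Qed.

Definition m0_mul (p q : M0 d) : M0 d := MkM0 (m0_mul_proof p q).

Fact m0_mulA : associative m0_mul.
Proof. by move=> p q r; apply: val_inj; rewrite /= addrA addnA. Qed.

Fact m0_mul1 : left_id m0_one m0_mul.
Proof. by move=> [[x k] Hp]; apply: val_inj; rewrite /= add0r add0n. Qed.

Fact m0_mulm1 : right_id m0_one m0_mul.
Proof. by move=> [[x k] Hp]; apply: val_inj; rewrite /= addr0 addn0. Qed.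

Fact m0_mulC : commutative m0_mul.
Proof. by move=> p q; apply: val_inj; rewrite /= addrC addnC. Qed.

Fact m0_unit (p q : M0 d) : m0_mul p q = m0_one -> p = m0_one /\ q = m0_one.
Proof.
case: p q => [[x k] Hp] [[y l] Hq] E.
have /= [_ /eqP] := congr1 (@m0val d) E.
rewrite addn_eq0 => /andP [/eqP k0 /eqP l0].
clear E; subst k l.
have x0 : x = 0 by apply/eqP; exact: Hp.
have y0 : y = 0 by apply/eqP; exact: Hq.
by subst x y; split; apply: val_inj.
Qed.

HB.instance Definition _ := Choice_isMonomialDef.Build (M0 d)
  m0_mulA m0_mul1 m0_mulm1 m0_unit.
HB.instance Definition _ := MonomialDef_isConomialDef.Build (M0 d) m0_mulC.

End M0Monoid.

Definition m0pt (d : nat) (p : M0 d) : 'rV[int]_d * int :=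
  ((m0val p).1, Posz (m0val p).2).

(* The Ehrhart ring A(P) = k[t^x s^k : k in N, x in kP cap Z^d], realised
   inside k[M0 d] as the k-span of these monomials (they form a monoid). *)
Definition inA (k : fieldType) (d m : nat) (N : 'I_m -> 'rV[int]_d) (h : 'I_m -> int)
  (f : {malg k[M0 d]}) : Prop :=
  forall p : M0 d, f@_p != 0 -> inC N h (m0pt p).

(* The graded maximal ideal m = A(P)_+ : elements of A(P) supported in
   positive degree. *)
Definition in_max_ideal (k : fieldType) (d m : nat) (N : 'I_m -> 'rV[int]_d)
  (h : 'I_m -> int) (f : {malg k[M0 d]}) : Prop :=
  inA N h f /\ forall p : M0 d, f@_p != 0 -> (0 < (m0val p).2)%N.

(* The canonical module of the normal ring A(P), realised (Danilov-Stanley) as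
   the ideal of A(P) spanned by the monomials t^x s^k with (x,k) in int(C_P). *)
Definition in_omega (k : fieldType) (d m : nat) (N : 'I_m -> 'rV[int]_d)
  (h : 'I_m -> int) (f : {malg k[M0 d]}) : Prop :=
  forall p : M0 d, f@_p != 0 -> inInt N h (m0pt p).

(* phi represents an element of Hom_{A(P)}(omega, A(P)): its restriction to omega
   is A(P)-linear with values in A(P) (values outside omega are irrelevant). *)
Definition is_hom_omega (k : fieldType) (d m : nat) (N : 'I_m -> 'rV[int]_d)
  (h : 'I_m -> int) (phi : {malg k[M0 d]} -> {malg k[M0 d]}) : Prop :=
  [/\ forall w, in_omega N h w -> inA N h (phi w),
      forall w1 w2, in_omega N h w1 -> in_omega N h w2 -> phi (w1 + w2) = phi w1 + phi w2 &
      forall a w, inA N h a -> in_omega N h w -> phi (a * w) = a * phi w].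

Definition in_trace (k : fieldType) (d m : nat) (N : 'I_m -> 'rV[int]_d)
  (h : 'I_m -> int) (f : {malg k[M0 d]}) : Prop :=
  exists (n : nat) (phi : 'I_n -> {malg k[M0 d]} -> {malg k[M0 d]})
         (w : 'I_n -> {malg k[M0 d]}),
    [/\ forall i, is_hom_omega N h (phi i), forall i, in_omega N h (w i) &
        f = \sum_i phi i (w i)].

Definition nearly_gorenstein (k : fieldType) (d m : nat) (N : 'I_m -> 'rV[int]_d)
  (h : 'I_m -> int) : Prop :=
  forall f : {malg k[M0 d]}, in_max_ideal N h f -> in_trace N h f.

Definition cone_cond (d m : nat) (N : 'I_m -> 'rV[int]_d) (h : 'I_m -> int) : Prop :=
  forall p : 'rV[int]_d * int, inC N h p -> p <> (0, 0) ->
    exists q r : 'rV[int]_d * int,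
      [/\ inInt N h q, inAnt N h r & p = (q.1 + r.1, q.2 + r.2)].

Definition slice_cond (d m : nat) (N : 'I_m -> 'rV[int]_d) (h : 'I_m -> int) (a : nat) : Prop :=
  forall x : 'rV[int]_d,
    inC N h (x, 1) <->
    exists y z : 'rV[int]_d,
      [/\ inInt N h (y, a%:Z), inAnt N h (z, 1 - a%:Z) & x = y + z].

(* Main.v *)
Require Import Defs.
From HB Require Import structures.
From mathcomp Require Import all_boot all_order all_algebra.
From mathcomp Require Import reals.
From mathcomp.multinomials Require Import monalg.
From mathcomp Require Import zify.
From mathcomp Require Import finmap.

Set Implicit Arguments.
Unset Strict Implicit.
Unset Printing Implicit Defensive.
Import Order.TTheory GRing.Theory Num.Theory.
Local Open Scope ring_scope.

Section Lin.
Variables (d m : nat) (N : 'I_m -> 'rV[int]_d) (h : 'I_m -> int).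

Definition lf i (p : 'rV[int]_d * int) : int := ipair (N i) p.1 + p.2 * h i.

Lemma ipairD n (x y : 'rV[int]_d) : ipair n (x + y) = ipair n x + ipair n y.
Proof. by rewrite /ipair -big_split; apply: eq_bigr => j _; rewrite mxE mulrDr. Qed.
Lemma ipairN n (x : 'rV[int]_d) : ipair n (- x) = - ipair n x.
Proof. by rewrite /ipair -sumrN; apply: eq_bigr => j _; rewrite mxE mulrN. Qed.
Lemma ipairB n (x y : 'rV[int]_d) : ipair n (x - y) = ipair n x - ipair n y.
Proof. by rewrite ipairD ipairN. Qed.
Lemma ipairZ n c (x : 'rV[int]_d) : ipair n (c *: x) = c * ipair n x.
Proof. by rewrite /ipair mulr_sumr; apply: eq_bigr => j _; rewrite mxE mulrCA. Qed.
Lemma ipair0 n : ipair n (0 : 'rV[int]_d) = 0.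
Proof. by rewrite /ipair big1 // => j _; rewrite mxE mulr0. Qed.
Lemma ipair_sum n (I : Type) (r : seq I) (P : pred I) (F : I -> 'rV[int]_d) :
  ipair n (\sum_(i <- r | P i) F i) = \sum_(i <- r | P i) ipair n (F i).
Proof.
elim/big_rec2: _ => [|i y1 y2 _ <-]; first exact: ipair0.
by rewrite ipairD.
Qed.

Lemma inCE p : inC N h p <-> forall i, 0 <= lf i p.
Proof. by split => H i; have := H i; rewrite /lf; lia. Qed.
Lemma inIntE p : inInt N h p <-> forall i, 0 < lf i p.
Proof. by split => H i; have := H i; rewrite /lf; lia. Qed.
Lemma inAntE p : inAnt N h p <-> forall i, -1 <= lf i p.
Proof. by split => H i; have := H i; rewrite /lf; lia. Qed.

Lemma lfD i p q : lf i (p.1 + q.1, p.2 + q.2) = lf i p + lf i q.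
Proof. rewrite /lf /= ipairD; lia. Qed.
Lemma lfB i p q : lf i (p.1 - q.1, p.2 - q.2) = lf i p - lf i q.
Proof. rewrite /lf /= ipairB; lia. Qed.

End Lin.

Section M0facts.
Variable d : nat.

Lemma m0valM (u v : M0 d) :
  m0val (mmul u v) = ((m0val u).1 + (m0val v).1, ((m0val u).2 + (m0val v).2)%N).
Proof. by []. Qed.

Lemma m0ptM (u v : M0 d) :
  m0pt (mmul u v) = ((m0pt u).1 + (m0pt v).1, (m0pt u).2 + (m0pt v).2).
Proof. by rewrite /m0pt m0valM /= PoszD. Qed.

Lemma m0pt1 : m0pt (mone : M0 d) = (0, 0).
Proof. by []. Qed.

Lemma m0pt_inj : injective (@m0pt d).
Proof.
move=> [[x k] Hx] [[y l] Hy]; rewrite /m0pt /= => [[Exy El]].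
subst l y.
by apply: val_inj.
Qed.

Lemma mmul_cancel (u v w : M0 d) : mmul u v = mmul u w -> v = w.
Proof.
move=> /(congr1 (@m0val d)); rewrite !m0valM => -[E1 E2].
apply: val_inj => /=.
have E1' : (m0val v).1 = (m0val w).1 by apply: (addrI (m0val u).1). have E2' : (m0val v).2 = (m0val w).2 by lia.
by move: E1' E2'; case: (m0val v) => ? ?; case: (m0val w) => ? ? /= -> ->.
Qed.

Definition toM0 (p : 'rV[int]_d * int) : M0 d := insubd (mone : M0 d) (p.1, `|p.2|%N).

Lemma toM0K p : 0 <= p.2 -> (p.2 = 0 -> p.1 = 0) -> m0pt (toM0 p) = p.
Proof.
case: p => x k /= k0 kx.
rewrite /toM0 /m0pt insubdK /=.
  by rewrite gez0_abs.
rewrite /m0_pred /=; apply/implyP => /eqP.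
by move/eqP; rewrite absz_eq0 => /eqP /kx ->.
Qed.

End M0facts.
From Stdlib Require Import ClassicalEpsilon Classical.
Opaque mkmalgU.
Lemma sum_neq0 (V : zmodType) (I : eqType) (s : seq I) (F : I -> V) :
  \sum_(i <- s) F i != 0 -> exists2 i, i \in s & F i != 0.
Proof.
elim: s => [|x s IH]; first by rewrite big_nil eqxx.
rewrite big_cons; case: (eqVneq (F x) 0) => [-> | Fx _]; last by exists x; rewrite ?mem_head.
by rewrite add0r => /IH [i Hi Fi]; exists i; rewrite ?inE ?Hi ?orbT.
Qed.

Section Alg.
Variables (k : fieldType) (d m : nat) (N : 'I_m -> 'rV[int]_d) (h : 'I_m -> int).
Hypothesis Hpt : forall p, inC N h p -> 0 <= p.2 /\ (p.2 = 0 -> p.1 = 0).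

Local Notation MA := {malg k[M0 d]}.

Lemma inC_toM0 p : inC N h p -> m0pt (toM0 p) = p.
Proof. by move=> /Hpt [H1 H2]; apply: toM0K. Qed.

Lemma int_C p : inInt N h p -> inC N h p.
Proof. by move=> H i; apply: ltW. Qed.

Lemma inA_C (c : k) : inA N h (c%:MP : MA).
Proof.
move=> p; rewrite mcoeffC; case: (eqVneq p mone) => [-> _|]; last by rewrite mulr0n eqxx.
by move=> i; rewrite m0pt1 /= mul0r oppr0 ipair0.
Qed.

Lemma inA_U (c : k) (u : M0 d) : inC N h (m0pt u) -> inA N h << c *g u >>.
Proof. by move=> Hu p; rewrite mcoeffU; case: (eqVneq u p) => [<- //|]; rewrite mulr0n eqxx. Qed.

Lemma omega_U (c : k) (u : M0 d) : inInt N h (m0pt u) -> in_omega N h << c *g u >>.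
Proof. by move=> Hu p; rewrite mcoeffU; case: (eqVneq u p) => [<- //|]; rewrite mulr0n eqxx. Qed.

Lemma omega_D (w1 w2 : MA) : in_omega N h w1 -> in_omega N h w2 -> in_omega N h (w1 + w2).
Proof.
move=> H1 H2 p; rewrite mcoeffD; case: (eqVneq (w1@_p) 0) => [E|/H1//].
by rewrite E add0r => /H2.
Qed.

Lemma omega_A (w : MA) : in_omega N h w -> inA N h w.
Proof. by move=> H p /H /int_C. Qed.

Lemma omega0 : in_omega N h (0 : MA).
Proof. by move=> p; rewrite mcoeff0 eqxx. Qed.

Lemma omega_sum (s : seq (M0 d)) (c : M0 d -> k) :
  (forall u, u \in s -> inInt N h (m0pt u)) ->
  in_omega N h (\sum_(u <- s) << c u *g u >> : MA).
Proof.
elim: s => [|x s IH] H; first by rewrite big_nil; exact: omega0.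
rewrite big_cons; apply: omega_D; first by apply: omega_U; apply: H; rewrite mem_head.
by apply: IH => u Hu; apply: H; rewrite inE Hu orbT.
Qed.

Lemma hom0 (phi : MA -> MA) : is_hom_omega N h phi -> phi 0 = 0.
Proof.
case=> _ Hadd _; have E := Hadd 0 0 omega0 omega0; rewrite addr0 in E.
by apply: (addrI (phi 0)); rewrite addr0 -E.
Qed.

Lemma U_C (c : k) (u : M0 d) : << c *g u >> = c%:MP * (<< u >> : MA).
Proof.
by rewrite malgM_def fgmulUU mulr1 mul1m.
Qed.

Lemma hom_scal (phi : MA -> MA) (c : k) (u : M0 d) : is_hom_omega N h phi ->
  inInt N h (m0pt u) -> phi << c *g u >> = c *: phi << u >>.
Proof.
case=> _ _ Hlin Hu; rewrite U_C (Hlin (c%:MP) (<< u >> : MA)).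
- exact: mul_malgC.
- exact: inA_C.
- exact: omega_U.
Qed.

Lemma hom_decomp (phi : MA -> MA) (s : seq (M0 d)) (c : M0 d -> k) :
  is_hom_omega N h phi -> (forall u, u \in s -> inInt N h (m0pt u)) ->
  phi (\sum_(u <- s) << c u *g u >>) = \sum_(u <- s) c u *: phi << u >>.
Proof.
move=> Hphi; elim: s => [|x s IH] H; first by rewrite !big_nil; exact: hom0.
have Hx : inInt N h (m0pt x) by apply: H; rewrite mem_head.
have Hs : forall u, u \in s -> inInt N h (m0pt u).
  by move=> u Hu; apply: H; rewrite inE Hu orbT.
rewrite !big_cons; case: (Hphi) => _ Hadd _.
rewrite Hadd.
- congr (_ + _); [exact: (hom_scal (c x) Hphi Hx) | exact: (IH Hs)].
- exact: omega_U.
- exact: omega_sum.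
Qed.

Lemma coefU_M (u v : M0 d) (g : MA) : (<< u >> * g)@_(mmul u v) = g@_v.
Proof.
rewrite malgM_def fgmulUg raddf_sum /=.
rewrite [in RHS](monalgE g) raddf_sum /=.
apply: eq_bigr => w _; rewrite mul1r.
rewrite (mcoeffU (mmul u w) (g@_w) (mmul u v)) (mcoeffU w (g@_w) v).
congr (_ *+ nat_of_bool _); apply/idP/idP => [/eqP/mmul_cancel ->|/eqP ->] //.
Qed.


Lemma pair_split (p q : 'rV[int]_d * int) : p = (q.1 + (p.1 - q.1), q.2 + (p.2 - q.2)).
Proof. by case: p => x y /=; rewrite [q.1 + _]addrC [q.2 + _]addrC !subrK. Qed.

Lemma mcoeffU1_neq0 (v q : M0 d) : (<< v >> : MA)@_q != 0 -> q = v.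
Proof.
rewrite (@mcoeffU1 _ k v q); case: (eqVneq v q) => [-> //|_]; by rewrite eqxx.
Qed.

Section Main1.
Hypothesis Hu : forall i, exists u, inInt N h u /\ lf N h i u = 1.

Lemma main1 : nearly_gorenstein k N h -> cone_cond N h.
Proof.
move=> NG p Cp p0.
have [P1 P2] := Hpt Cp.
have pos : 0 < p.2.
  rewrite lt0r P1 andbT; apply/eqP => E; apply: p0.
  by case: p P2 E {Cp P1} => x y /= P2 E; rewrite E P2.
set v := toM0 p. have Hv : m0pt v = p := inC_toM0 Cp.
have Hmax : in_max_ideal N h (<< v >> : MA).
  split=> q /mcoeffU1_neq0 ->; first by rewrite Hv.
  by move: pos; rewrite -Hv /m0pt /=.
have [n [phi [w [Hphi Hw Ef]]]] := NG _ Hmax.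
have : (\sum_i phi i (w i))@_v != 0.
  by rewrite -Ef (@mcoeffU1 _ k v v) eqxx oner_eq0.
rewrite raddf_sum => /sum_neq0 [i _].
have E : phi i (w i) = \sum_(u <- msupp (w i)) (w i)@_u *: phi i << u >>.
  rewrite {1}[w i]monalgE; apply: hom_decomp => // u.
  by rewrite -mcoeff_neq0; exact: (Hw i).
rewrite E raddf_sum => /sum_neq0 [u Hu_in].
rewrite /= mcoeffZ mulf_eq0 negb_or => /andP [_ Hpu].
have Hu_int : inInt N h (m0pt u) by apply: (Hw i); rewrite mcoeff_neq0.
exists (m0pt u), (p.1 - (m0pt u).1, p.2 - (m0pt u).2); split => //; last exact: pair_split.
apply/inAntE => j.
have [u'p [Hu'1 Hu'2]] := Hu j.
set u' := toM0 u'p. have Hu' : m0pt u' = u'p := inC_toM0 (int_C Hu'1).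
have Hcomm : << u' >> * phi i << u >> = << u >> * phi i << u' >>.
  case: (Hphi i) => _ _ Hlin.
  have Cu' : inC N h (m0pt u') by rewrite Hu'; exact: int_C.
  have Iu' : inInt N h (m0pt u') by rewrite Hu'.
  have e1 := Hlin << u' >> << u >> (inA_U Cu') (omega_U Hu_int).
  have e2 := Hlin << u >> << u' >> (inA_U (int_C Hu_int)) (omega_U Iu').
  have EE : (<<u'>> * <<u>> : MA) = <<u>> * <<u'>> by exact: mulrC.
  apply: (etrans (esym e1)); apply: (etrans _ e2); exact: (congr1 (phi i) EE).
have : (<< u >> * phi i << u' >>)@_(mmul u' v) != 0 by rewrite -Hcomm coefU_M.
rewrite mcoeff_neq0 => /msuppM_le [k1 [k2 [H1 H2 E12]]].
move: H1; rewrite msuppU1 inE => /eqP Ek1; subst k1.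
have Ck2 : inC N h (m0pt k2).
  have Iu' : inInt N h (m0pt u') by rewrite Hu'.
  case: (Hphi i) => HA _ _; have HA' := HA << u' >> (omega_U Iu').
  by apply: (HA' k2); rewrite mcoeff_neq0.
move/inCE: Ck2 => /(_ j).
have := congr1 (@m0pt d) E12; rewrite !m0ptM Hu' Hv => -[E1 E2].
have F1 := congr1 (ipair (N j)) E1; rewrite !ipairD in F1.
have F2 := congr1 (fun z => z * h j) E2; rewrite /= !mulrDl in F2.
move: Hu'2; rewrite /lf /= ipairB mulrBl; lia.
Qed.

End Main1.

Definition hsh (r : 'rV[int]_d * int) (u : M0 d) : MA :=
  << toM0 ((m0pt u).1 + r.1, (m0pt u).2 + r.2) >>.

Definition shiftf (r : 'rV[int]_d * int) (w : MA) : MA :=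
  mmap (@mkmalgU (M0 d) k mone) (hsh r) w.

Section Shift.
Variable r : 'rV[int]_d * int.
Hypothesis Ar : inAnt N h r.

Lemma shift_C (u : M0 d) : inInt N h (m0pt u) ->
  inC N h ((m0pt u).1 + r.1, (m0pt u).2 + r.2).
Proof.
move=> /inIntE Hu; apply/inCE => i; rewrite lfD.
by have := Hu i; move/inAntE: Ar => /(_ i); lia.
Qed.

Lemma shiftU (c : k) (u : M0 d) :
  shiftf r << c *g u >> = << c *g toM0 ((m0pt u).1 + r.1, (m0pt u).2 + r.2) >>.
Proof. by rewrite /shiftf mmapU /hsh U_C. Qed.

Lemma shiftD (w1 w2 : MA) : shiftf r (w1 + w2) = shiftf r w1 + shiftf r w2.
Proof. exact: mmapD. Qed.

Lemma shiftA (w : MA) : in_omega N h w -> inA N h (shiftf r w).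
Proof.
move=> Hw p; rewrite /shiftf mmapE raddf_sum => /sum_neq0 [u Hu].
rewrite /= mcoeffCM mulf_eq0 negb_or => /andP [_ /mcoeffU1_neq0 ->].
have Iu : inInt N h (m0pt u) by apply: Hw; rewrite mcoeff_neq0.
by rewrite inC_toM0; apply: shift_C.
Qed.

Lemma shift_mulU (c1 c2 : k) (s u : M0 d) : inC N h (m0pt s) -> inInt N h (m0pt u) ->
  << c1 *g s >> * shiftf r << c2 *g u >> = shiftf r << c1 * c2 *g mmul s u >>.
Proof.
move=> Cs Iu; have E1 := shiftU c2 u; have E2 := shiftU (c1 * c2) (mmul s u).
apply: (etrans (congr1 (fun z => << c1 *g s >> * z) E1)).
apply: esym; apply: (etrans E2); apply: esym.
have E3 := fgmulUU c1 c2 s (toM0 ((m0pt u).1 + r.1, (m0pt u).2 + r.2)).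
rewrite -malgM_def in E3; apply: (etrans E3).
have Ct := shift_C Iu.
suff E : mmul s (toM0 ((m0pt u).1 + r.1, (m0pt u).2 + r.2)) =
         toM0 ((m0pt (mmul s u)).1 + r.1, (m0pt (mmul s u)).2 + r.2).
  exact: (congr1 (fun t => << c1 * c2 *g t >>) E).
apply: m0pt_inj; rewrite m0ptM (inC_toM0 Ct) inC_toM0; last first.
  rewrite m0ptM; apply/inCE => i.
  move/inCE: Cs => /(_ i); move/inCE: Ct => /(_ i).
  rewrite /lf /= !ipairD !mulrDl; lia.
by rewrite m0ptM /= !addrA.
Qed.

Lemma shift_sum (I : Type) (sq : seq I) (F : I -> MA) :
  shiftf r (\sum_(i <- sq) F i) = \sum_(i <- sq) shiftf r (F i).
Proof.
apply: (big_morph (shiftf r)) => [x y|]; first exact: shiftD.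
by rewrite /shiftf mmap0.
Qed.

Lemma shiftM (a w : MA) : inA N h a -> in_omega N h w ->
  shiftf r (a * w) = a * shiftf r w.
Proof.
move=> Ha Hw.
have Ea := monalgE a; have Ew := monalgE w.
set A := \sum_(s <- msupp a) _ in Ea.
set W := \sum_(u <- msupp w) _ in Ew.
apply: (etrans (congr1 (fun z => shiftf r (z * w)) Ea)).
apply: (etrans (congr1 (fun z => shiftf r (A * z)) Ew)).
apply: esym.
apply: (etrans (congr1 (fun z => z * shiftf r w) Ea)).
apply: (etrans (congr1 (fun z => A * shiftf r z) Ew)).
apply: esym.
rewrite /A mulr_suml shift_sum mulr_suml.
apply: eq_big_seq => s Hs.
rewrite /W mulr_sumr shift_sum shift_sum mulr_sumr.
apply: eq_big_seq => u Hu.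
have E3 := fgmulUU (a@_s) (w@_u) s u.
rewrite -malgM_def in E3.
apply: (etrans (congr1 (shiftf r) E3)).
apply: esym; apply: shift_mulU.
  by apply: Ha; rewrite mcoeff_neq0.
by apply: Hw; rewrite mcoeff_neq0.
Qed.

Lemma shift_hom : is_hom_omega N h (shiftf r).
Proof.
split.
- exact: shiftA.
- by move=> w1 w2 _ _; exact: shiftD.
- by move=> a w Ha Hw; exact: shiftM.
Qed.

End Shift.

Lemma main2 : cone_cond N h -> nearly_gorenstein k N h.
Proof.
move=> Hc f [HfA Hfpos].
have Hr : forall p, exists r, inC N h p -> p <> (0,0) ->
    inInt N h (p.1 - r.1, p.2 - r.2) /\ inAnt N h r.
  move=> p; case: (classic (inC N h p /\ p <> (0,0))) => [[Cp p0]|nH].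
  - have [q [r [Iq Ar Ep]]] := Hc p Cp p0; exists r => _ _; split=> //.
    suff -> : (p.1 - r.1, p.2 - r.2) = q by [].
    by rewrite Ep /= !addrK; case: q {Iq Ep}.
  - by exists p => Cp p0; exfalso; apply: nH.
pose rf p := proj1_sig (constructive_indefinite_description _ (Hr p)).
have Hrf : forall p, inC N h p -> p <> (0,0) ->
    inInt N h (p.1 - (rf p).1, p.2 - (rf p).2) /\ inAnt N h (rf p).
  by move=> p; exact: (proj2_sig (constructive_indefinite_description _ (Hr p))).
pose qf p := (p.1 - (rf p).1, p.2 - (rf p).2).
pose sq := msupp f.
pose pi (i : 'I_(size sq)) := nth mone sq i.
have Hpi : forall i : 'I_(size sq), inC N h (m0pt (pi i)) /\ m0pt (pi i) <> (0,0).
  move=> i; have Hin : pi i \in msupp f by exact: mem_nth.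
  split; first by apply: HfA; rewrite mcoeff_neq0.
  have := Hfpos (pi i); rewrite mcoeff_neq0 => /(_ Hin).
  by rewrite /m0pt => pos [_ E]; move: pos; rewrite E.
exists (size sq), (fun i => shiftf (rf (m0pt (pi i)))),
  (fun i => << f@_(pi i) *g toM0 (qf (m0pt (pi i))) >>); split.
- move=> i; have [C1 C2] := Hpi i; have [_ Ar] := Hrf _ C1 C2.
  exact: shift_hom.
- move=> i; have [C1 C2] := Hpi i; have [Iq _] := Hrf _ C1 C2.
  by apply: omega_U; rewrite inC_toM0 //; exact: int_C.
- rewrite {1}[f]monalgE (big_nth mone) big_mkord; apply: eq_bigr => i _.
  have [C1 C2] := Hpi i; have [Iq _] := Hrf _ C1 C2.
  rewrite shiftU.
  suff E : toM0 ((m0pt (toM0 (qf (m0pt (pi i))))).1 + (rf (m0pt (pi i))).1,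
                 (m0pt (toM0 (qf (m0pt (pi i))))).2 + (rf (m0pt (pi i))).2) = pi i.
    exact: (congr1 (fun t => << f@_(pi i) *g t >>) (esym E)).
  apply: m0pt_inj; rewrite (inC_toM0 (int_C Iq)) /qf /= !subrK.
  by rewrite inC_toM0 //; case: (m0pt (pi i)) C1.
Qed.

End Alg.
Section Slice.
Variables (d m : nat) (N : 'I_m -> 'rV[int]_d) (h : 'I_m -> int).
Hypothesis Hpt : forall p, inC N h p -> 0 <= p.2 /\ (p.2 = 0 -> p.1 = 0).
Hypothesis Hm : (0 < m)%N.

Lemma int_pos p : inInt N h p -> 0 < p.2.
Proof.
move=> Ip; have [P1 P2] := Hpt (int_C Ip).
rewrite lt0r P1 andbT; apply/eqP => E.
have := Ip (Ordinal Hm); rewrite E (P2 E) mul0r oppr0 ipair0 ltxx //.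
Qed.

Lemma main3 a : is_codegree N h a -> cone_cond N h -> slice_cond N h a.
Proof.
case=> a1 [xc Ic] amin Hc x; split.
- move=> Cx.
  have x0 : ((x, 1) : 'rV[int]_d * int) <> (0, 0) by move=> /(congr1 snd) /= E; lia.
  have [q [r [Iq Ar [Ex E1]]]] := Hc _ Cx x0.
  have qpos := int_pos Iq.
  have qa : a%:Z <= q.2.
    rewrite leNgt; apply/negP => qlt.
    have qn : q.2 = `|q.2|%N by rewrite gez0_abs // ltW.
    have H1 : (1 <= `|q.2|)%N by move: qpos; rewrite qn; lia.
    have H2 : (`|q.2| < a)%N by move: qlt; rewrite qn; lia.
    apply: (amin _ H1 H2 q.1); rewrite -qn.
    by case: q Iq {Ex E1 qpos qn qlt H1 H2}.
  case: (ltrP a%:Z q.2) => [qgt|qle].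
  + have Ccr : inC N h (xc + r.1, a%:Z + r.2).
      apply/inCE => i; rewrite (lfD _ _ _ (xc, a%:Z) r).
      move/inIntE: Ic => /(_ i); move/inAntE: Ar => /(_ i); lia.
    have [P1 P2] := Hpt Ccr; rewrite /= in P1 P2.
    have e2 : a%:Z + r.2 = 0 by lia.
    have e1 := P2 e2.
    exists xc, (x - xc); split => //; last by rewrite addrC subrK.
    apply/inAntE => i; move/inCE: Cx => /(_ i).
    move/inAntE: Ar => /(_ i).
    have : lf N h i (xc, a%:Z) + lf N h i r = 0.
      by rewrite -lfD /= e1 e2 /lf ipair0 mul0r addr0.
    rewrite /lf /= ipairB mulrBl mul1r; lia.
  + have qe : q.2 = a%:Z by apply/eqP; rewrite eq_le qle qa.
    exists q.1, r.1; split; last by [].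
    * by rewrite -qe; case: q Iq {Ex E1 qa qle qpos qe}.
    * have er : 1 - a%:Z = r.2 by lia.
      by rewrite er; case: r Ar {Ex E1 er}.
- move=> [y [z [Iy Az ->]]]; apply/inCE => i.
  move/inIntE: Iy => /(_ i); move/inAntE: Az => /(_ i).
  rewrite /lf /= ipairD mulrBl mul1r; lia.
Qed.

Lemma main4 a : IDP N h -> slice_cond N h a -> cone_cond N h.
Proof.
move=> Hidp Hs p Cp p0.
have [P1 P2] := Hpt Cp.
have pos : 0 < p.2.
  rewrite lt0r P1 andbT; apply/eqP => E; apply: p0.
  by case: p P2 E {Cp P1} => x y /= P2 E; rewrite E P2.
have pn : p.2 = `|p.2|%N by rewrite gez0_abs.
have kpos : (0 < `|p.2|)%N by move: pos; rewrite pn; lia.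
have Cp' : inC N h (p.1, (`|p.2|%N)%:Z) by rewrite -pn -surjective_pairing.
have [v [Hv Ex]] := Hidp _ kpos _ Cp'.
have [y [z [Iy Az Ev0]]] := (Hs (v (Ordinal kpos))).1 (Hv _).
exists (y, a%:Z), (p.1 - y, p.2 - a%:Z); split => //; last first.
  by rewrite /= [y + _]addrC [a%:Z + _]addrC !subrK -surjective_pairing.
apply/inAntE => i.
have Hsum : lf N h i p = \sum_(j < `|p.2|%N) lf N h i (v j, 1).
  rewrite /lf Ex ipair_sum big_split /=; congr (_ + _).
  by rewrite sumr_const card_ord mul1r {1}pn -mulr_natr natz mulrC.
rewrite (bigD1 (Ordinal kpos)) //= in Hsum.
move: Hsum; set S := bigop _ _ _ => Hsum.
have Hrest : 0 <= S by apply: sumr_ge0 => j _; move/inCE: (Hv j) => /(_ i).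
have : lf N h i (v (Ordinal kpos), 1) = lf N h i (y, a%:Z) + lf N h i (z, 1 - a%:Z).
  by rewrite -lfD /= Ev0; congr lf; congr pair; rewrite addrC subrK.
move/inAntE: Az => /(_ i).
rewrite (lfB _ _ _ p (y, a%:Z)) /=.
lia.
Qed.

End Slice.
From mathcomp Require Import ring lra.
Lemma bezout_vec (d : nat) (n : 'rV[int]_d) : primitive n -> exists y, ipair n y = 1.
Proof.
move=> Hn.
have step : forall j, (j <= d)%N -> exists g y,
    ipair n y = g /\ (forall l : 'I_d, (l < j)%N -> (g %| n ord0 l)%Z).
  elim=> [_|j IH jd].
    by exists 0, 0; split; [exact: ipair0 | move=> l].
  have [g [y [Ey Hg]]] := IH (ltnW jd).
  pose l0 : 'I_d := Ordinal jd.
  have [u [v Euv]] := Bezoutz g (n ord0 l0).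
  exists (gcdz g (n ord0 l0)), (u *: y + v *: delta_mx 0 l0); split.
    rewrite ipairD !ipairZ Ey -Euv; congr (_ + _ * _).
    rewrite /ipair (bigD1 l0) //= big1 ?addr0.
      by rewrite mxE !eqxx mulr1.
    by move=> j' /negbTE nj; rewrite mxE nj andbF mulr0.
  move=> l; rewrite ltnS leq_eqVlt => /orP [/eqP El|lj].
    have -> : l = l0 by apply: val_inj.
    exact: dvdz_gcdr.
  exact: (dvdz_trans (dvdz_gcdl _ _) (Hg l lj)).
have [g [y [Ey Hg]]] := step d (leqnn d).
have /Hn ag : forall j, (g %| n ord0 j)%Z by move=> j; apply: Hg.
have [Eg|Eg] : g = 1 \/ g = -1 by lia.
  by exists y; rewrite Ey Eg.
by exists (- y); rewrite ipairN Ey Eg opprK.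
Qed.

Section Geo.
Variables (R : realType) (d m : nat) (N : 'I_m -> 'rV[int]_d) (h : 'I_m -> int).
Hypothesis P_lattice : lattice_polytope R N h.
Hypothesis P_fulldim : full_dim R N h.
Hypothesis P_irr : irredundant R N h.

Definition emb (x : 'rV[int]_d) : 'rV[R]_d := map_mx (fun z : int => z%:~R) x.

Lemma rpair_emb n x : rpair n (emb x) = (ipair n x)%:~R.
Proof.
rewrite /rpair /ipair rmorph_sum; apply: eq_bigr => j _.
by rewrite mxE /= intrM.
Qed.

Lemma rpairD n (x y : 'rV[R]_d) : rpair n (x + y) = rpair n x + rpair n y.
Proof. by rewrite /rpair -big_split; apply: eq_bigr => j _; rewrite mxE mulrDr. Qed.
Lemma rpairZ n c (x : 'rV[R]_d) : rpair n (c *: x) = c * rpair n x.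
Proof. by rewrite /rpair mulr_sumr; apply: eq_bigr => j _; rewrite mxE mulrCA. Qed.
Lemma rpairN n (x : 'rV[R]_d) : rpair n (- x) = - rpair n x.
Proof. by rewrite /rpair -sumrN; apply: eq_bigr => j _; rewrite mxE mulrN. Qed.
Lemma rpair0 n : rpair n (0 : 'rV[R]_d) = 0.
Proof. by rewrite /rpair big1 // => j _; rewrite mxE mulr0. Qed.

Lemma bounded (z y : 'rV[R]_d) : inP N h z -> (forall i, 0 <= rpair (N i) y) -> y = 0.
Proof.
move=> Pz Hy; apply/rowP => j; rewrite mxE.
apply/eqP; apply/negP => /negP yj.
have [V HV] := P_lattice.
pose B : R := \sum_(i < size V) `|(V`_i ord0 j)%:~R : R|.
have B0 : 0 <= B by apply: sumr_ge0 => i _.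
have ay : 0 < `|y ord0 j| by rewrite normr_gt0.
pose t := (B + `|z ord0 j| + 1) / `|y ord0 j|.
have t0 : 0 <= t by apply: divr_ge0 => //; rewrite addr_ge0 ?addr_ge0.
have ty : t * `|y ord0 j| = B + `|z ord0 j| + 1 by rewrite /t divfK // gt_eqF.
have Pt : inP N h (z + t *: y).
  move=> i; rewrite rpairD rpairZ; apply: (le_trans (Pz i)).
  by rewrite lerDl mulr_ge0.
have [lam [lam0 lam1 Ez]] := (HV _).1 Pt.
have := congr1 (fun M : 'rV[R]_d => M ord0 j) Ez.
rewrite /= !mxE summxE => Ej.
have lam_le1 : forall i, lam i <= 1.
  move=> i; rewrite -lam1 (bigD1 i) //= lerDl; exact: sumr_ge0.
have H1 : `|z ord0 j + t * y ord0 j| <= B.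
  rewrite Ej; apply: (le_trans (ler_norm_sum _ _ _)).
  apply: ler_sum => i _; rewrite !mxE normrM ger0_norm //.
  by rewrite -[X in _ <= X]mul1r ler_wpM2r.
have H2 : `|t * y ord0 j| - `|z ord0 j| <= `|z ord0 j + t * y ord0 j|.
  by rewrite [z ord0 j + _]addrC lerB_normD.
move: H2; rewrite normrM ger0_norm // ty => H2.
have := le_trans H2 H1; lra.
Qed.

Hypothesis Hm : (0 < m)%N.

Lemma pointed p : inC N h p -> 0 <= p.2 /\ (p.2 = 0 -> p.1 = 0).
Proof.
case: p => x k Cp /=.
have [x0 Hx0] := P_fulldim.
have Px0 : inP N h x0 by move=> i; apply: ltW.
have Cr : forall i, - (k%:~R * (h i)%:~R) <= (ipair (N i) x)%:~R :> R.
  by move=> i; rewrite -intrM -mulrNz ler_int; exact: (Cp i).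
split.
  rewrite leNgt; apply/negP => k0.
  pose y := emb x - k%:~R *: x0.
  have Hy : forall i, 0 < rpair (N i) y.
    move=> i; rewrite /y rpairD rpairN rpairZ rpair_emb.
    have := Cr i; have := Hx0 i.
    have : (k%:~R : R) < 0 by rewrite ltrz0.
    move: (k%:~R : R) ((h i)%:~R : R) (rpair (N i) x0) ((ipair (N i) x)%:~R : R).
    move=> K H X A K0 HX AK; nra.
  have y0 := bounded Px0 (fun i => ltW (Hy i)).
  by have := Hy (Ordinal Hm); rewrite y0 rpair0 ltxx.
move=> k0; subst k.
have : emb x = 0.
  apply: (bounded Px0) => i; rewrite rpair_emb ler0z.
  by have := Cp i; rewrite mul0r oppr0.
move/rowP => Ex; apply/rowP => j; have := Ex j; rewrite !mxE.
by move/eqP; rewrite intr_eq0 => /eqP.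
Qed.

End Geo.
Section Facet.
Variables (R : realType) (d m : nat) (N : 'I_m -> 'rV[int]_d) (h : 'I_m -> int).
Hypothesis P_lattice : lattice_polytope R N h.
Hypothesis P_fulldim : full_dim R N h.
Hypothesis P_irr : irredundant R N h.
Hypothesis N_primitive : forall i, primitive (N i).
Local Notation emb := (@emb R d).

Lemma rpair_sum n (I : Type) (r : seq I) (P : pred I) (F : I -> 'rV[R]_d) :
  rpair n (\sum_(i <- r | P i) F i) = \sum_(i <- r | P i) rpair n (F i).
Proof.
elim/big_rec2: _ => [|i y1 y2 _ <-]; first exact: rpair0.
by rewrite rpairD.
Qed.

Lemma facet_point i : exists z : 'rV[R]_d,
  rpair (N i) z + (h i)%:~R = 0 /\ forall j, j != i -> 0 < rpair (N j) z + (h j)%:~R.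
Proof.
have [x1 [Hx1a Hx1b]] := P_irr i.
have [x0 Hx0] := P_fulldim.
pose a0 := rpair (N i) x0 + (h i)%:~R.
pose a1 := - (rpair (N i) x1 + (h i)%:~R).
have a00 : 0 < a0 by have := Hx0 i; rewrite /a0; lra.
have a10 : 0 < a1 by move: Hx1b; rewrite /a1; lra.
pose t := a0 / (a0 + a1).
have ts : t * (a0 + a1) = a0 by rewrite /t divfK // gt_eqF // addr_gt0.
have t0 : 0 <= t by rewrite /t divr_ge0 // ltW // addr_gt0.
have t1 : t < 1.
  have s0 : 0 < a0 + a1 by lra.
  rewrite /t ltr_pdivrMr //; lra.
exists ((1 - t) *: x0 + t *: x1).
have E : forall j, rpair (N j) ((1 - t) *: x0 + t *: x1) + (h j)%:~R =
   (1 - t) * (rpair (N j) x0 + (h j)%:~R) + t * (rpair (N j) x1 + (h j)%:~R).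
  by move=> j; rewrite rpairD !rpairZ; ring.
split.
  rewrite E; rewrite -/a0; have -> : rpair (N i) x1 + (h i)%:~R = - a1 by rewrite /a1 opprK.
  nra.
move=> j ji; rewrite E.
have := Hx0 j; have := Hx1a j ji; nra.
Qed.


Lemma vertex_in (V : seq 'rV[int]_d) (HV : forall x : 'rV[R]_d, inP N h x <-> inConv V x)
  (k : 'I_(size V)) : inP N h (emb V`_k).
Proof.
apply/HV; exists (fun l => if l == k then 1 else 0); split.
- by move=> l; case: eqP.
- by rewrite (bigD1 k) //= eqxx big1 ?addr0 // => l /negbTE ->.
- rewrite (bigD1 k) //= eqxx scale1r big1 ?addr0 // => l /negbTE ->.
  by rewrite scale0r.
Qed.

Lemma facet_lattice i : exists w : 'rV[int]_d * int,
  lf N h i w = 0 /\ forall j, j != i -> 0 < lf N h j w.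
Proof.
have [z [Zi Zj]] := facet_point i.
have [V HV] := P_lattice.
have Pz : inP N h z.
  move=> j; case: (eqVneq j i) => [->|ji]; first by move: Zi; lra.
  by have := Zj j ji; lra.
have [lam [lam0 lam1 Ez]] := (HV z).1 Pz.
pose c (k : 'I_(size V)) j := ipair (N j) V`_k + h j.
have c0 : forall k j, 0 <= c k j.
  move=> k j; have := vertex_in HV k j; rewrite rpair_emb -intrN ler_int /c; lia.
have Ezj : forall j, rpair (N j) z + (h j)%:~R = \sum_k lam k * (c k j)%:~R.
  move=> j; rewrite Ez rpair_sum.
  have -> : (h j)%:~R = \sum_k lam k * (h j)%:~R :> R by rewrite -mulr_suml lam1 mul1r.
  rewrite -big_split /=; apply: eq_bigr => k _.
  by rewrite rpairZ rpair_emb -mulrDr /c intrD.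
have lamS : forall k, lam k != 0 -> c k i = 0.
  move=> k lk; have := Ezj i; rewrite Zi => /esym /eqP.
  rewrite psumr_eq0 => [/allP /(_ k (mem_index_enum k)) /=|]; last first.
    by move=> l _; rewrite mulr_ge0 // ler0z.
  rewrite mulf_eq0 (negbTE lk) /= intr_eq0 => /eqP //.
pose S := [pred k : 'I_(size V) | c k i == 0].
exists (\sum_(k | S k) V`_k, \sum_(k | S k) 1).
have Elf : forall j, lf N h j (\sum_(k | S k) V`_k, \sum_(k | S k) 1) = \sum_(k | S k) c k j.
  move=> j; rewrite /lf /= ipair_sum mulr_suml -big_split /=.
  by apply: eq_bigr => k _; rewrite mul1r.
split.
  by rewrite Elf big1 // => k /eqP.
move=> j ji; rewrite Elf.
have H0 : 0 <= \sum_(k | S k) c k j by apply: sumr_ge0 => k _.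
rewrite lt_neqAle H0 andbT; apply/eqP => /esym /eqP; rewrite psumr_eq0 => [/allP Hall|]; last by move=> k _.
have := Zj j ji; rewrite Ezj big1 ?ltxx // => k _.
case: (eqVneq (lam k) 0) => [->|lk]; first by rewrite mul0r.
have := Hall k (mem_index_enum k); rewrite /S /= (lamS k lk) eqxx /= => /eqP ->.
by rewrite mulr0.
Qed.

Lemma facet_unit i : exists u, inInt N h u /\ lf N h i u = 1.
Proof.
have [w [Wi Wj]] := facet_lattice i.
have [y Hy] := bezout_vec (@N_primitive i).
pose K : int := 1 + \sum_j `|ipair (N j) y|.
have K1 : forall j, 1 + `|ipair (N j) y| <= K.
  move=> j; rewrite /K lerD2l (bigD1 j) //= lerDl; exact: sumr_ge0.
have Elf : forall j, lf N h j (y + K *: w.1, K * w.2) = ipair (N j) y + K * lf N h j w.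
  by move=> j; rewrite /lf /= ipairD ipairZ -mulrA; lia.
exists (y + K *: w.1, K * w.2); split; last by rewrite Elf Hy Wi mulr0 addr0.
apply/inIntE => j; rewrite Elf.
case: (eqVneq j i) => [->|ji]; first by rewrite Hy Wi mulr0 addr0.
have := Wj j ji; have := K1 j; nia.
Qed.

End Facet.

Unset Implicit Arguments.

Theorem proposition3p2 (k : fieldType)
  (k_infinite : forall s : seq k, exists x : k, x \notin s)
  (R : realType) (d m : nat) (N : 'I_m -> 'rV[int]_d) (h : 'I_m -> int)
  (N_primitive : forall i, primitive (N i))
  (P_lattice : lattice_polytope R N h)
  (P_fulldim : full_dim R N h)
  (P_irredundant : irredundant R N h)
  (a : nat) (a_codeg : is_codegree N h a) :
  (nearly_gorenstein k N h <-> cone_cond N h) /\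
  (nearly_gorenstein k N h -> slice_cond N h a) /\
  (IDP N h -> slice_cond N h a -> nearly_gorenstein k N h).
Proof.
case: (posnP m) => [m0|Hm].
  subst m.
  have Hcone : cone_cond N h.
    move=> p _ _; exists p, (0, 0); split; try by case.
    by rewrite !addr0 -surjective_pairing.
  have HNG : nearly_gorenstein k N h.
    move=> f _; exists 1%N, (fun _ => id), (fun _ => f); split.
    - move=> _; split => //; by move=> w _ p _; case.
    - by move=> _ p _; case.
    - by rewrite big_ord1.
  have Hslice : slice_cond N h a.
    move=> x; split.
    - by move=> _; exists x, 0; split; [case | case | rewrite addr0].
    - by move=> _; case.
  by split; [split | split].
have Hpt := pointed P_lattice P_fulldim Hm.
have Hu := facet_unit P_lattice P_fulldim P_irredundant N_primitive.
have M1 : nearly_gorenstein k N h -> cone_cond N h := main1 Hpt Hu.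
have M2 : cone_cond N h -> nearly_gorenstein k N h := main2 Hpt.
split; first by split.
split.
  by move=> NG; apply: (main3 Hpt Hm a_codeg); exact: M1.
by move=> Hidp Hsl; apply: M2; exact: (main4 Hpt Hm Hidp Hsl).
Qed.
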